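(* For every quasi-symmetric bimodal model $\mathcal{M}$ there exist a symmetric bimodal model $\mathcal{M}^+$ (both relations symmetric) and a surjective $\boxdot$-morphism $h$ from $\mathcal{M}^+$ onto $\mathcal{M}$; consequently, for every state $x$ of $\mathcal{M}^+$ and every $\phi\in\mathcal{L}(\boxdot)$, $\mathcal{M}^+,x\vDash\phi$ iff $\mathcal{M},h(x)\vDash\phi$.
   Context: Fix a nonempty set $\mathbf{P}$ of propositional variables. A bimodal model is $\langle S,R_1,R_2,V\rangle$ with $S$ nonempty, $R_1,R_2\subseteq S\times S$, $V:\mathbf{P}\to\mathcal{P}(S)$. It is quasi-symmetric if for all $i,j\in\{1,2\}$ and all $s,t\in S$ such that $tR_ju$ for some $u\in S$, $sR_it$ implies $tR_is$. $\mathcal{L}(\boxdot):\ \phi::=p\mid\neg\phi\mid(\phi\wedge\phi)\mid\boxdot\phi$, with $\mathcal{M},s\vDash\boxdot\phi$ iff for all $t,u$ with $sR_1t$ and $sR_2u$, ($\mathcal{M},t\vDash\phi\iff\mathcal{M},u\vDash\phi$); atoms and Booleans as usual. A function $f:S\to S'$ is a $\boxdot$-morphism from $\langle S,R_1,R_2,V\rangle$ to $\langle S',R_1',R_2',V'\rangle$ if for all $x\in S$: (Var) $x\in V(p)$ iff $f(x)\in V'(p)$ for all $p$; (Forth) for all $y,z\in S$, if $xR_1y$, $xR_2z$ and $f(y)\neq f(z)$, then $f(x)R_1'f(y)$ and $f(x)R_2'f(z)$; (Back) for all $y',z'\in S'$, if $f(x)R_1'y'$, $f(x)R_2'z'$ and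 $y'\neq z'$, then there are $y,z\in S$ with $xR_1y$, $xR_2z$, $f(y)=y'$, $f(z)=z'$. *)

(* Defs.v *)
From Stdlib Require Import Classical.

Set Implicit Arguments.

(* A bimodal model <S, R1, R2, V> over the propositional variables P.
   The carrier S is a Rocq type; nonemptiness is the field [st0]. *)
Record model (P : Type) := Model {
  st : Type;
  st0 : st;
  R1 : st -> st -> Prop;
  R2 : st -> st -> Prop;
  V  : P -> st -> Prop
}.

Arguments st {P} m.
Arguments R1 {P} m _ _.
Arguments R2 {P} m _ _.
Arguments V {P} m _ _.

Definition Rel {P} (M : model P) (i : bool) : st M -> st M -> Prop :=
  if i then R1 M else R2 M.

Definition quasi_symmetric {P} (M : model P) : Prop :=
  forall (i j : bool) (s t : st M),
    (exists u, Rel M j t u) -> Rel M i s t -> Rel M i t s.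

Definition symmetric_model {P} (M : model P) : Prop :=
  (forall s t, R1 M s t -> R1 M t s) /\ (forall s t, R2 M s t -> R2 M t s).

Inductive form (P : Type) : Type :=
  | Var : P -> form P
  | Neg : form P -> form P
  | And : form P -> form P -> form P
  | Dot : form P -> form P.

Arguments Var {P} _.
Arguments Neg {P} _.
Arguments And {P} _ _.
Arguments Dot {P} _.

Fixpoint sat {P} (M : model P) (s : st M) (phi : form P) : Prop :=
  match phi with
  | Var p => V M p s
  | Neg a => ~ sat M s a
  | And a b => sat M s a /\ sat M s b
  | Dot a => forall t u, R1 M s t -> R2 M s u -> (sat M t a <-> sat M u a)
  end.

Definition dot_morphism {P} (M M' : model P) (f : st M -> st M') : Prop :=
  forall x : st M,
    (forall p, V M p x <-> V M' p (f x)) /\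
    (forall y z, R1 M x y -> R2 M x z -> f y <> f z ->
        R1 M' (f x) (f y) /\ R2 M' (f x) (f z)) /\
    (forall y' z', R1 M' (f x) y' -> R2 M' (f x) z' -> y' <> z' ->
        exists y z, R1 M x y /\ R2 M x z /\ f y = y' /\ f z = z').

Definition surjective {A B} (f : A -> B) : Prop := forall b, exists a, f a = b.

(* Main.v *)
Require Import Defs.
From Stdlib Require Import Classical.

Section Constr.
Variable P : Type.
Variable M : model P.

Definition live (y : st M) : Prop := exists j u, Rel M j y u.
Definition raw : Type := (st M * option (st M * bool))%type.

Definition MR (k : bool) (a b : raw) : Prop :=
  match a, b with
  | (x, None), (y, None) => Rel M k x y /\ live y
  | (x, None), (t, Some (s, i)) => i = k /\ s = x /\ Rel M k x t /\ ~ live t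
  | (t, Some (s, i)), (x, None) => i = k /\ s = x /\ Rel M k x t /\ ~ live t
  | _, _ => False
  end.

Definition valid (a : raw) : Prop :=
  match snd a with None => True | Some (s, i) => Rel M i s (fst a) /\ ~ live (fst a) end.

Definition Mst := { a : raw | valid a }.

Definition Mp : model P :=
  @Model P Mst (exist _ (st0 M, None) I)
    (fun a b => MR true (proj1_sig a) (proj1_sig b))
    (fun a b => MR false (proj1_sig a) (proj1_sig b))
    (fun p a => V M p (fst (proj1_sig a))).

Definition h (a : st Mp) : st M := fst (proj1_sig a).

Lemma RelMp k (a b : st Mp) : Rel Mp k a b <-> MR k (proj1_sig a) (proj1_sig b).
Proof. destruct k; simpl; tauto. Qed.

Lemma corr (x : st Mp) :
  ((forall k y, Rel Mp k x y -> Rel M k (h x) (h y)) /\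
   (forall k y', Rel M k (h x) y' -> exists y, Rel Mp k x y /\ h y = y'))
  \/ (~ live (h x) /\ forall y z, R1 Mp x y -> R2 Mp x z -> False).
Proof.
  destruct x as [[x0 [[s i]|]] Hv]; unfold h; cbn [proj1_sig fst snd valid] in *.
  - right. assert (Hd : ~ live x0) by (apply (proj2 Hv)). split; [exact Hd|].
    intros [[y0 [[? ?]|]] ?] [[z0 [[? ?]|]] ?]; simpl; try tauto.
    intros [-> _] [? _]; discriminate.
  - left. split.
    + intros k [[y0 [[s i]|]] Hy] Hr; apply RelMp in Hr; simpl in Hr; [|tauto].
      destruct Hr as (_ & _ & H & _); exact H.
    + intros k y' Hk.
      destruct (classic (live y')) as [Hl|Hl].
      * exists (exist _ (y', None) I). split; [apply RelMp; simpl; repeat split; first [exact Hk|exact Hl]|reflexivity].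
      * assert (Hval : valid (y', Some (x0, k))) by (split; [exact Hk|exact Hl]).
        exists (exist _ (y', Some (x0, k)) Hval).
        split; [apply RelMp; simpl; repeat split; first [exact Hk|exact Hl]|reflexivity].
Qed.

Lemma sat_corr (x : st Mp) (phi : form P) : sat Mp x phi <-> sat M (h x) phi.
Proof.
  revert x; induction phi as [p|a IH|a IHa b IHb|a IH]; intro x; simpl.
  - unfold h; tauto.
  - rewrite IH; tauto.
  - rewrite IHa, IHb; tauto.
  - destruct (corr x) as [[F B]|[Hd N]].
    + split.
      * intros H t u Ht Hu.
        destruct (B true t Ht) as [t' [Ht' <-]].
        destruct (B false u Hu) as [u' [Hu' <-]].
        rewrite <- IH, <- IH; apply H; assumption.
      * intros H t u Ht Hu. rewrite IH, IH. apply H.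
        apply (F true t Ht). apply (F false u Hu).
    + split; intros _ t u Ht Hu; exfalso.
      * apply Hd; exists true, t; exact Ht.
      * exact (N t u Ht Hu).
Qed.

End Constr.

Theorem mainTheorem15 (P : Type) (p0 : P) (M : model P) :
  quasi_symmetric M ->
  exists (Mp : model P) (h : st Mp -> st M),
    symmetric_model Mp /\ dot_morphism Mp M h /\ surjective h /\
    (forall (x : st Mp) (phi : form P), sat Mp x phi <-> sat M (h x) phi).
Proof.
  intro Hq.
  exists (@Mp P M), (@h P M). split; [|split; [|split]].
  - assert (S : forall k (a b : @raw P M), @MR P M k a b -> @MR P M k b a).
    { intros k [x0 [[s i]|]] [y0 [[s' i']|]]; simpl; try tauto.
      intros [Hr Hl]. split.
      - destruct Hl as [j [u Hu]]; apply (Hq k j x0 y0); [exists u; exact Hu|exact Hr].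
      - exists k, y0; exact Hr. }
    split; intros a b; apply S.
  - intro x. split; [intro; simpl; unfold h; tauto|split].
    + intros y z Hy Hz Hne.
      destruct (@corr P M x) as [[F _]|[_ N]].
      * split; [apply (F true y Hy)|apply (F false z Hz)].
      * exfalso; eapply N; eassumption.
    + intros y' z' Hy Hz _.
      destruct (@corr P M x) as [[_ B]|[Hd _]].
      * destruct (B true y' Hy) as [y [? ?]].
        destruct (B false z' Hz) as [z [? ?]].
        exists y, z; auto.
      * exfalso; apply Hd; exists true, y'; exact Hy.
  - intro b. exists (exist _ (b, None) I : st (@Mp P M)). reflexivity.
  - apply sat_corr.
Qed.
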